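(* Let $(G,c,\gamma)$ be an M2VPI system and run Algorithm 3 (described in the context) on it. If Algorithm 3 returns labels $y\in(\mathbb{R}\cup\{\infty\})^V$, then $y=y^{\max}$ provided the system is feasible. If Algorithm 3 returns INFEASIBLE, then the system is infeasible.
   Context: An M2VPI system: directed multigraph $G=(V,E)$, $n=|V|$, arc costs $c\in\mathbb{R}^E$, gains $\gamma\in\mathbb{R}^E_{>0}$; arc $e=(v,w)$ encodes $y_v-\gamma_ey_w\le c_e$. If feasible, $y^{\max}\in(\mathbb{R}\cup\{\infty\})^V$ is its pointwise maximal solution, with $y^{\max}_u=\infty$ iff $y_u$ is unbounded from above over the feasible set. Notation: for a walk $P$ with arcs $e_1,\dots,e_k$, $c(P):=\sum_i(\prod_{j<i}\gamma_{e_j})c_{e_i}$, $\gamma(P):=\prod_i\gamma_{e_i}$; a cycle at $u$ is a $u$-$u$ walk with distinct intermediate nodes, flow-absorbing if $\gamma(C)<1$; arc $(v,w)$ is violated w.r.t. labels $y$ if $y_v>c_{vw}+\gamma_{vw}y_w$. Grapevine$(H,y,s)$: for rounds $i=1,\dots,n$, every node $v$ simultaneously sets $y_v:=\min(y_v,\min_{vw\in\delta^+(v)}c_{vw}+\gamma_{vw}y_w)$, recording a minimizing arc $\mathrm{pred}(v,i)$ if $y_v$ decreased (ties broken arbitrarily); returns the new labels and the walk from $s$ traced by following recorded arcs in reverse chronological order from $\mathrm{pred}(s,n)$ (reading $\mathrm{pred}(v,i-1)$ if $\mathrm{pred}(v,i)$ is empty). $H_u$: split $u$ into $u$ (keeping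 outgoing arcs) and a new sink $u'$ receiving all arcs of $H$ entering $u$ (same costs and gains). Algorithm 3: $y\equiv\infty$, $G^{(0)}=(V,\emptyset)$; for each $u\in V$ in turn (phase $k$): $G^{(k)}:=G^{(k-1)}\cup\delta^+(u)$; $y_u:=\min_{uv\in\delta^+(u)}c_{uv}+\gamma_{uv}y_v$; if $y_u=\infty$ and there is a flow-absorbing cycle $C$ at $u$ in $G^{(k)}$, $y_u:=c(C)/(1-\gamma(C))$. If $y_u<\infty$: set $\bar y_{u'}:=y_u$, $\bar y_v:=y_v$ ($v\in V$), run Grapevine$(G^{(k)}_u,\bar y,u)$ getting $(\bar y,P)$; return INFEASIBLE if an arc of $G^{(k)}_u$ is violated w.r.t. $\bar y$ or $P$ has at least one arc and $\gamma(P)\ge1$. Otherwise run the look-ahead Newton–Dinkelbach method with initial point $\bar y_{u'}$ and supergradient $\gamma(P)-1$ on $f(\delta):=\inf\{c^\top x+\delta\sum_{e\in\delta^-(u)}\gamma_ex_e-\delta: x\in\mathbb{R}^{E(G^{(k)})}_{\ge0},\ x(\delta^+(u))=1,\ \sum_{e\in\delta^+(v)}x_e-\sum_{e\in\delta^-(v)}\gamma_ex_e=0\ \forall v\ne u\}$; its oracle at $\delta$ sets $\bar y_{u'}:=\delta$ and runs Grapevine$(G^{(k)}_u,\bar y,u)$ (updating $\bar y$): $f(\delta)=-\infty$ if an arc remains violated, otherwise $f(\delta)=\bar y_u-\delta$ with supergradient $\gamma(P)-1$ if the returned walk $P$ ends at $u'$ and $-1$ otherwise. The method: from $(\delta^{(i)},g^{(i)})$,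 stop with $\delta^{(i)}$ if $f(\delta^{(i)})=0$; else $\delta:=\delta^{(i)}-f(\delta^{(i)})/g^{(i)}$ with supergradient $g$, NO ROOT if $f(\delta)=-\infty$ or ($f(\delta)<0$, $g\ge0$); try $\delta':=2\delta-\delta^{(i)}$ and use it if $-\infty<f(\delta')<0$ with negative supergradient; continue from the chosen point. If NO ROOT, return INFEASIBLE; else $y:=\bar y|_V$. After all phases return $y$. *)

(* Defs.v *)
From HB Require Import structures.
From mathcomp Require Import all_boot all_order all_algebra.
From mathcomp Require Import constructive_ereal.

Set Implicit Arguments.
Unset Strict Implicit.
Unset Printing Implicit Defensive.

Import Order.TTheory GRing.Theory Num.Theory.
Local Open Scope ring_scope.

(* An M2VPI system: node set V (finType, n = #|V|), arc set E (finType; a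
   multigraph, parallel arcs and loops allowed), arc e = (tl e, hd e),
   cost c e, gain gam e > 0; arc e encodes  y_(tl e) - gam e * y_(hd e) <= c e. *)

Inductive result (R : realFieldType) (V : finType) :=
  | Labels of (V -> \bar R)
  | Infeasible.
Arguments Infeasible {R V}.

Section M2VPI.
Variables (R : realFieldType) (V E : finType) (tl hd : E -> V) (c gam : E -> R).

Definition feasible_sol (y : V -> R) : Prop :=
  forall e, y (tl e) - gam e * y (hd e) <= c e.

Definition feasible : Prop := exists y, feasible_sol y.

Definition is_ymax (y : V -> \bar R) : Prop :=
  forall u,
    (forall y', feasible_sol y' -> ((y' u)%:E <= y u)%E) /\
    (forall b : \bar R, (forall y', feasible_sol y' -> ((y' u)%:E <= b)%E) ->
        (y u <= b)%E).

Definition wgain (P : seq E) : R := \prod_(e <- P) gam e.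
(* c(P) = sum_i (prod_{j<i} gam e_j) c e_i *)
Fixpoint wcost (P : seq E) : R :=
  if P is e :: P' then c e + gam e * wcost P' else 0.

Fixpoint is_walk (A : pred E) (v w : V) (P : seq E) : bool :=
  if P is e :: P' then [&& A e, tl e == v & is_walk A (hd e) w P'] else v == w.

(* cycle at u in (V, A): a u-u walk whose intermediate nodes are distinct *)
Definition is_cycle_at (A : pred E) (u : V) (C : seq E) : bool :=
  is_walk A u u C && uniq (map hd (take (size C).-1 C)).

(* ----- the split graph H_u = (V, A)_u on nodes option V; None = u' ----- *)
Section Split.
Variables (A : pred E) (u : V).

Definition sT (e : E) : option V := Some (tl e).
Definition sH (e : E) : option V := if hd e == u then None else Some (hd e).

Definition arcval (y : option V -> \bar R) (e : E) : \bar R :=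
  ((c e)%:E + (gam e)%:E * y (sH e))%E.

Definition bestarc (y : option V -> \bar R) (x : option V) : \bar R :=
  \big[Order.min/+oo%E]_(e | A e && (sT e == x)) arcval y e.

Definition round (y : option V -> \bar R) (x : option V) : \bar R :=
  Order.min (y x) (bestarc y x).

(* walk traced from x backwards in time starting at round i *)
Fixpoint trace (pr : option V -> nat -> option E) (x : option V) (i : nat)
    : seq E :=
  if i is i'.+1 then
    if pr x i is Some e then e :: trace pr (sH e) i' else trace pr x i'
  else [::].

(* Grapevine(H_u, y0, s) returns (y', P); ties broken arbitrarily
   (hence a relation). ys i = labels after round i, pr x i = pred(x, i). *)
Definition grapevine (y0 : option V -> \bar R) (s : option V)
    (y' : option V -> \bar R) (P : seq E) : Prop :=
  exists (ys : nat -> option V -> \bar R) (pr : option V -> nat -> option E),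
    [/\ ys 0%N = y0,
        (forall i x, (0 < i <= #|V|)%N -> ys i x = round (ys i.-1) x),
        (forall i x, (0 < i <= #|V|)%N ->
           if (ys i x < ys i.-1 x)%E then
             exists e, [/\ pr x i = Some e, A e, sT e = x &
                           arcval (ys i.-1) e = ys i x]
           else pr x i = None),
        y' = ys #|V| &
        P = trace pr s #|V|].

Definition violated (y : option V -> \bar R) : bool :=
  [exists e, A e && (arcval y e < y (sT e))%E].

Definition wend (x : option V) (P : seq E) : option V := last x (map sH P).

(* Oracle of the Newton-Dinkelbach method at delta: sets ybar_{u'} := delta,
   runs Grapevine(H_u, ybar, u); returns new labels, f(delta), supergradient. *)
Definition oracle (ybar : option V -> \bar R) (delta : R)
    (ybar' : option V -> \bar R) (fv : \bar R) (g : R) : Prop :=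
  exists P,
    [/\ grapevine (fun x => if x is Some _ then ybar x else delta%:E)
                  (Some u) ybar' P,
        fv = (if violated ybar' then -oo else ybar' (Some u) - delta%:E)%E &
        g = (if wend (Some u) P == None then wgain P - 1 else -1)].

Inductive nresult := Root of (option V -> \bar R) | NoRoot.

(* Look-ahead Newton-Dinkelbach method; state = current labels ybar, current
   point delta, f(delta) (finite), supergradient g. *)
Inductive newton : (option V -> \bar R) -> R -> R -> R -> nresult -> Prop :=
  | nw_stop yb d g : newton yb d 0 g (Root yb)
  | nw_noroot_inf yb d f g yb1 g1 :
      f != 0 -> oracle yb (d - f / g) yb1 -oo%E g1 ->
      newton yb d f g NoRoot
  | nw_noroot_neg yb d f g yb1 f1 g1 :
      f != 0 -> oracle yb (d - f / g) yb1 f1%:E g1 -> f1 < 0 -> 0 <= g1 ->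
      newton yb d f g NoRoot
  | nw_accept yb d f g yb1 f1 g1 yb2 f2 g2 res :
      f != 0 -> oracle yb (d - f / g) yb1 f1%:E g1 -> ~~ ((f1 < 0) && (0 <= g1)) ->
      oracle yb1 (2 * (d - f / g) - d) yb2 f2%:E g2 -> f2 < 0 -> g2 < 0 ->
      newton yb2 (2 * (d - f / g) - d) f2 g2 res ->
      newton yb d f g res
  | nw_reject yb d f g yb1 f1 g1 yb2 fv2 g2 res :
      f != 0 -> oracle yb (d - f / g) yb1 f1%:E g1 -> ~~ ((f1 < 0) && (0 <= g1)) ->
      oracle yb1 (2 * (d - f / g) - d) yb2 fv2 g2 ->
      ~ (exists f2, [/\ fv2 = f2%:E, f2 < 0 & g2 < 0]) ->
      newton yb1 (d - f / g) f1 g1 res ->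
      newton yb d f g res.

End Split.

Definition addout (A : pred E) (u : V) : pred E := fun e => A e || (tl e == u).

Definition minout (y : V -> \bar R) (u : V) : \bar R :=
  \big[Order.min/+oo%E]_(e | tl e == u) ((c e)%:E + (gam e)%:E * y (hd e))%E.

Definition start_label (A : pred E) (y : V -> \bar R) (u : V) (r : R) : Prop :=
  minout y u = r%:E \/
  (minout y u = +oo%E /\
   exists C, [/\ is_cycle_at A u C, wgain C < 1 & r = wcost C / (1 - wgain C)]).

Definition ybar_init (y : V -> \bar R) (u : V) (r : R) : option V -> \bar R :=
  fun x => if x is Some v then (if v == u then r%:E else y v) else r%:E.

(* phases A y s res : starting with processed arcs A (= arcs of G^(k-1)) and
   labels y, processing the nodes of s in turn, the algorithm returns res. *)
Inductive phases : pred E -> (V -> \bar R) -> seq V -> result R V -> Prop :=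
  | ph_done A y : phases A y [::] (Labels y)
  | ph_infty A y u s res :
      minout y u = +oo%E ->
      ~ (exists C, is_cycle_at (addout A u) u C /\ wgain C < 1) ->
      phases (addout A u) (fun v => if v == u then +oo%E else y v) s res ->
      phases A y (u :: s) res
  | ph_gv_infeasible A y u s r yb1 P :
      start_label (addout A u) y u r ->
      grapevine (addout A u) u (ybar_init y u r) (Some u) yb1 P ->
      violated (addout A u) u yb1 || ((0 < size P)%N && (1 <= wgain P)) ->
      phases A y (u :: s) Infeasible
  | ph_noroot A y u s r yb1 P a :
      start_label (addout A u) y u r ->
      grapevine (addout A u) u (ybar_init y u r) (Some u) yb1 P ->
      ~~ (violated (addout A u) u yb1 || ((0 < size P)%N && (1 <= wgain P))) ->
      yb1 (Some u) = a%:E ->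
      newton (addout A u) u yb1 r (a - r) (wgain P - 1) NoRoot ->
      phases A y (u :: s) Infeasible
  | ph_root A y u s r yb1 P a yb res :
      start_label (addout A u) y u r ->
      grapevine (addout A u) u (ybar_init y u r) (Some u) yb1 P ->
      ~~ (violated (addout A u) u yb1 || ((0 < size P)%N && (1 <= wgain P))) ->
      yb1 (Some u) = a%:E ->
      newton (addout A u) u yb1 r (a - r) (wgain P - 1) (Root yb) ->
      phases (addout A u) (fun v => yb (Some v)) s res ->
      phases A y (u :: s) res.

Definition alg3 (s : seq V) (res : result R V) : Prop :=
  phases (fun _ => false) (fun _ => +oo%E) s res.

End M2VPI.

(* Main.v *)
Require Import Defs.
From HB Require Import structures.
From mathcomp Require Import all_boot all_order all_algebra.
From mathcomp Require Import constructive_ereal.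
From mathcomp Require Import lra zify ring.
Import Order.TTheory GRing.Theory Num.Theory.
Local Open Scope ring_scope.

Set Implicit Arguments.
Unset Strict Implicit.
Unset Printing Implicit Defensive.


Section Aff.
Variable R : realFieldType.

Definition aff (a g : R) (z : \bar R) : \bar R := (a%:E + g%:E * z)%E.

Lemma aff_fin a g r : aff a g r%:E = (a + g * r)%:E.
Proof. by []. Qed.

Lemma aff_py a g : 0 < g -> aff a g +oo%E = +oo%E.
Proof. by move=> g0; rewrite /aff gt0_muley ?lte_fin. Qed.

Lemma aff_Ny a g : 0 < g -> aff a g -oo%E = -oo%E.
Proof. by move=> g0; rewrite /aff gt0_muleNy ?lte_fin. Qed.

Lemma aff01 z : aff 0 1 z = z.
Proof.
case: z => [r||]; first by rewrite aff_fin add0r mul1r.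
- by rewrite aff_py.
- by rewrite aff_Ny.
Qed.

Lemma aff_comp a g b h z : 0 < g -> 0 < h ->
  aff a g (aff b h z) = aff (a + g * b) (g * h) z.
Proof.
move=> g0 h0; case: z => [r||].
- by rewrite !aff_fin; congr (_%:E); rewrite mulrDr addrA mulrA.
- by rewrite !aff_py // mulr_gt0.
- by rewrite !aff_Ny // mulr_gt0.
Qed.

Lemma aff_le a g z z' : 0 < g -> (aff a g z <= aff a g z')%E = (z <= z')%E.
Proof.
move=> g0; case: z => [r||]; case: z' => [r'||];
  rewrite ?aff_fin ?aff_py ?aff_Ny // ?lee_fin.
all: try by rewrite lerD2l ler_pM2l.
all: by rewrite ?leey ?leNye.
Qed.

Lemma aff_lt a g z z' : 0 < g -> (aff a g z < aff a g z')%E = (z < z')%E.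
Proof.
move=> g0; case: z => [r||]; case: z' => [r'||];
  rewrite ?aff_fin ?aff_py ?aff_Ny // ?lte_fin.
all: try by rewrite ltrD2l ltr_pM2l.
all: by rewrite ?ltey ?ltNye.
Qed.

Lemma aff_eqy a g z : 0 < g -> (aff a g z == +oo%E) = (z == +oo%E).
Proof. by move=> g0; case: z => [r||]; rewrite ?aff_fin ?aff_py ?aff_Ny. Qed.

Lemma aff_eqNy a g z : 0 < g -> (aff a g z == -oo%E) = (z == -oo%E).
Proof. by move=> g0; case: z => [r||]; rewrite ?aff_fin ?aff_py ?aff_Ny. Qed.

End Aff.


Section Gen.
Variables (R : realFieldType) (E N : finType) (T H : E -> N) (c gam : E -> R).
Hypothesis gpos : forall e, 0 < gam e.

Fixpoint gw (B : pred E) (x y : N) (W : seq E) : bool :=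
  if W is e :: W' then [&& B e, T e == x & gw B (H e) y W'] else x == y.

Lemma wgain_nil : wgain gam [::] = 1. Proof. by rewrite /wgain big_nil. Qed.
Lemma wgain_cons e W : wgain gam (e :: W) = gam e * wgain gam W.
Proof. by rewrite /wgain big_cons. Qed.
Lemma wgain_cat W1 W2 : wgain gam (W1 ++ W2) = wgain gam W1 * wgain gam W2.
Proof. by rewrite /wgain big_cat. Qed.
Lemma wgain_pos W : 0 < wgain gam W.
Proof. by rewrite /wgain prodr_gt0. Qed.
Lemma wcost_cat W1 W2 :
  wcost c gam (W1 ++ W2) = wcost c gam W1 + wgain gam W1 * wcost c gam W2.
Proof.
elim: W1 => [|e W1 IH] /=; first by rewrite wgain_nil add0r mul1r.
by rewrite IH wgain_cons mulrDr addrA mulrA.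
Qed.

Definition wval (L : N -> \bar R) y W := aff (wcost c gam W) (wgain gam W) (L y).

Lemma val_nil L y : wval L y [::] = L y.
Proof. by rewrite /wval wgain_nil aff01. Qed.

Lemma val_cat L y W1 W2 :
  wval L y (W1 ++ W2) = aff (wcost c gam W1) (wgain gam W1) (wval L y W2).
Proof. by rewrite /wval aff_comp ?wgain_pos // wcost_cat wgain_cat. Qed.

Lemma val_cons L y e W : wval L y (e :: W) = aff (c e) (gam e) (wval L y W).
Proof.
rewrite -cat1s val_cat /=; congr aff; last by rewrite wgain_cons wgain_nil mulr1.
by rewrite mulr0 addr0.
Qed.

Lemma gw_cat (B : pred E) x z W1 W2 :
  gw B x z (W1 ++ W2) =
  gw B x (last x (map H W1)) W1 && gw B (last x (map H W1)) z W2.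
Proof.
elim: W1 x => [|e W1 IH] x /=; first by rewrite eqxx.
by rewrite IH !andbA.
Qed.

Lemma gw_last (B : pred E) x y W : gw B x y W -> y = last x (map H W).
Proof.
elim: W x => [|e W IH] x /=; first by move/eqP.
by case/and3P => _ _ /IH.
Qed.

Lemma gw_sub (B B' : pred E) x y W :
  (forall e, B e -> B' e) -> gw B x y W -> gw B' x y W.
Proof.
move=> sub; elim: W x => [|e W IH] x //=.
by case/and3P => /sub -> -> /IH.
Qed.

Lemma gw_restrict (B B' : pred E) x y W :
  gw B x y W -> (forall e, e \in W -> B e -> B' e) -> gw B' x y W.
Proof.
elim: W x => [|e W IH] x //= /and3P[Be -> gW] h.
rewrite (h e) ?inE ?eqxx //=; apply: IH => // f fin; apply: h.
by rewrite inE fin orbT.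
Qed.

Lemma gw_mem (B : pred E) x y W e : gw B x y W -> e \in W -> B e.
Proof.
elim: W x => [|e' W IH] x //=; case/and3P => Be' _ gW.
by rewrite inE => /orP[/eqP->|/(IH _ gW)].
Qed.

Lemma walk_ineqE (B : pred E) (L : N -> \bar R) x y W :
  (forall e, B e -> (L (T e) <= aff (c e) (gam e) (L (H e)))%E) ->
  gw B x y W -> (L x <= wval L y W)%E.
Proof.
move=> ok; elim: W x => [|e W IH] x /=; first by move/eqP->; rewrite val_nil.
case/and3P => Be /eqP <- gW; rewrite val_cons.
by apply: le_trans (ok _ Be) _; rewrite aff_le // IH.
Qed.

Lemma walk_ineq (B : pred E) (z : N -> R) x y W :
  (forall e, B e -> z (T e) <= c e + gam e * z (H e)) ->
  gw B x y W -> z x <= wcost c gam W + wgain gam W * z y.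
Proof.
move=> ok gW.
have := @walk_ineqE B (fun v => (z v)%:E) x y W.
by rewrite /wval aff_fin lee_fin; apply => // e Be; rewrite aff_fin lee_fin ok.
Qed.


Lemma prefix_to (B : pred E) x0 y x W0 : x \in map H W0 -> gw B x0 y W0 ->
  exists W1 W2, [/\ W0 = W1 ++ W2, W1 != [::], gw B x0 x W1 & gw B x y W2].
Proof.
elim: W0 x0 => [|e W0 IH] x0 //=; rewrite inE => xin /and3P[Be /eqP Te gW].
case: (eqVneq x (H e)) => [xe|xne].
  by exists [:: e], W0; rewrite /= Be Te xe !eqxx gW.
move: xin; rewrite (negPf xne) /= => xin.
have [W1 [W2 [-> _ g1 g2]]] := IH _ xin gW.
by exists (e :: W1), W2; rewrite /= Be Te eqxx g1 g2.
Qed.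

Lemma decomp (B : pred E) x y W : gw B x y W -> ~~ uniq (x :: map H W) ->
  exists Q1 C Q2 w, [/\ W = Q1 ++ C ++ Q2, C != [::], gw B x w Q1,
                        gw B w w C & gw B w y Q2].
Proof.
elim: W x => [|e W IH] x /=; first by [].
case/and3P => Be /eqP Te gW; rewrite negb_and negbK.
case/orP => [xin|nu].
  have gW0 : gw B x y (e :: W) by rewrite /= Be Te eqxx gW.
  have [W1 [W2 [eW n1 g1 g2]]] := @prefix_to B x y x (e :: W) xin gW0.
  by exists [::], W1, W2, x; rewrite /= eW eqxx.
have [Q1 [C [Q2 [w [-> nC g1 gC g2]]]]] := IH _ gW nu.
by exists (e :: Q1), C, Q2, w; rewrite /= Be Te eqxx g1.
Qed.

Lemma uniq_size_card (s : seq N) : uniq s -> (size s <= #|N|)%N.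
Proof. by move/card_uniqP <-; exact: max_card. Qed.
Definition bmin (B : pred E) (L : N -> \bar R) (x : N) : \bar R :=
  \big[Order.min/+oo%E]_(e | B e && (T e == x)) aff (c e) (gam e) (L (H e)).

Definition relax (B : pred E) (L : N -> \bar R) (x : N) : \bar R :=
  Order.min (L x) (bmin B L x).

Lemma relax_le (B : pred E) L x : (relax B L x <= L x)%E.
Proof. by rewrite /relax ge_min lexx. Qed.

Lemma relax_le_arc (B : pred E) L e : B e -> (relax B L (T e) <= aff (c e) (gam e) (L (H e)))%E.
Proof.
move=> Be; rewrite /relax ge_min; apply/orP; right.
by apply: bigmin_le_cond; rewrite Be eqxx.
Qed.

Lemma relax_cases (B : pred E) L x :
  relax B L x = L x \/ exists e, [/\ B e, T e = x & relax B L x = aff (c e) (gam e) (L (H e))].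
Proof.
rewrite /relax /bmin.
set F := \big[_/_]_(e | _) _.
have : F = +oo%E \/ exists e, [/\ B e, T e = x & F = aff (c e) (gam e) (L (H e))].
  rewrite /F; apply: (big_ind (fun z => z = +oo%E \/ exists e, [/\ B e, T e = x & z = aff (c e) (gam e) (L (H e))])).
  - by left.
  - move=> z1 z2 h1 h2; case: (leP z1 z2) => _; [exact: h1|exact: h2].
  - by move=> e /andP[Be /eqP Te]; right; exists e.
case=> [->|[e [Be Te ->]]].
  by left; apply/min_idPl; rewrite leey.
case: (leP (L x) (aff (c e) (gam e) (L (H e)))) => _; first by left.
by right; exists e.
Qed.

Lemma relax_geP (B : pred E) L x b :
  (b <= relax B L x)%E <->
  ((b <= L x)%E /\ forall e, B e -> T e = x -> (b <= aff (c e) (gam e) (L (H e)))%E).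
Proof.
rewrite /relax le_min; split.
- case/andP => h1 /bigmin_geP [_ h2]; split => // e Be Te.
  by apply: h2; rewrite Be Te eqxx.
- case=> h1 h2; rewrite h1 /=; apply/bigmin_geP; split; first exact: leey.
  by move=> e /andP[Be /eqP Te]; apply: h2.
Qed.

Section Seq.
Variables (B : pred E) (m : nat) (Ls : nat -> N -> \bar R).
Hypothesis Hs : forall i x, (i < m)%N -> Ls i.+1 x = relax B (Ls i) x.

Lemma Ls_mono i x : (i <= m)%N -> (Ls i x <= Ls 0 x)%E.
Proof.
elim: i x => [|i IH] x lim //.
by rewrite Hs // (le_trans (@relax_le B (Ls i) _)) // IH // ltnW.
Qed.

Lemma F1 i x y W : (i <= m)%N -> gw B x y W -> (size W <= i)%N ->
  (Ls i x <= wval (Ls 0) y W)%E.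
Proof.
elim: i x y W => [|i IH] x y W lim.
  by case: W => [|//] /= /eqP -> _; rewrite val_nil.
move=> gW; rewrite leq_eqVlt => /orP[/eqP sW|sW].
- case: W sW gW => [//|e W] [sW] /= /and3P[Be /eqP Te gW].
  rewrite Hs // -Te val_cons (le_trans (@relax_le_arc B (Ls i) e Be)) // aff_le //.
  by apply: IH => //; [rewrite ltnW|rewrite sW].
- rewrite Hs // (le_trans (@relax_le B (Ls i) _)) //; apply: IH => //.
  exact: ltnW.
Qed.

Lemma F2 i x : (i <= m)%N ->
  exists y W, [/\ gw B x y W, (size W <= i)%N & Ls i x = wval (Ls 0) y W].
Proof.
elim: i x => [|i IH] x lim.
  by exists x, [::]; rewrite val_nil /= eqxx.
rewrite Hs //; case: (relax_cases B (Ls i) x) => [->|[e [Be Te ->]]].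
  have [y [W [gW sW ->]]] := IH x (ltnW lim).
  by exists y, W; split => //; rewrite (leq_trans sW).
have [y [W [gW sW ->]]] := IH (H e) (ltnW lim).
by exists y, (e :: W); rewrite val_cons /= Be Te eqxx gW.
Qed.

Lemma Ls_lb (z : N -> R) i x : (i <= m)%N ->
  (forall e, B e -> z (T e) <= c e + gam e * z (H e)) ->
  (forall v, ((z v)%:E <= Ls 0 v)%E) -> ((z x)%:E <= Ls i x)%E.
Proof.
move=> lim ok lb; have [y [W [gW _ ->]]] := F2 x lim.
apply: le_trans (walk_ineqE (L := fun v => (z v)%:E) _ gW) _.
  by move=> e Be; rewrite aff_fin lee_fin ok.
by rewrite /wval aff_le ?wgain_pos.
Qed.

End Seq.


Section GenK.
Variables (B : pred E) (m : nat) (Ls : nat -> N -> \bar R).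
Hypothesis Hs : forall i x, (i < m)%N -> Ls i.+1 x = relax B (Ls i) x.
Hypothesis Hm : (#|N| <= m.+1)%N.
Variable ys : N -> R.
Hypothesis ysok : forall e, B e -> ys (T e) <= c e + gam e * ys (H e).
Hypothesis yslb : forall v, ((ys v)%:E <= Ls 0 v)%E.
Hypothesis Hcyc : forall w C, C != [::] -> gw B w w C ->
  1 <= wgain gam C \/
  exists l, Ls 0 w = l%:E /\ l <= wcost c gam C + wgain gam C * l.

Lemma genK e : B e -> (Ls m (T e) <= aff (c e) (gam e) (Ls m (H e)))%E.
Proof.
move=> Be; rewrite leNgt; apply/negP => viol.
have [y [W [gW sW eW]]] := F2 Hs (H e) (leqnn m).
set W' := e :: W.
have gW' : gw B (T e) y W' by rewrite /= Be eqxx gW.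
have vW' : wval (Ls 0) y W' = aff (c e) (gam e) (Ls m (H e)) by rewrite /W' val_cons eW.
have key : forall y'' W'', gw B (T e) y'' W'' -> (size W'' <= m)%N ->
    (wval (Ls 0) y W' < wval (Ls 0) y'' W'')%E.
  move=> y'' W'' g'' s''; rewrite vW'.
  exact: lt_le_trans viol (F1 Hs (leqnn m) g'' s'').
have nu : ~~ uniq (T e :: map H W').
  apply/negP => /uniq_size_card; rewrite /= size_map => sz.
  have := key _ _ gW' (leq_trans sz Hm); by rewrite ltxx.
have [Q1 [C [Q2 [w [eQ nC g1 gC g2]]]]] := decomp gW' nu.
set v := wval (Ls 0) y Q2.
have sW'le : (size W' <= m.+1)%N by rewrite /W' /= ltnS.
have eVW : wval (Ls 0) y W' = aff (wcost c gam Q1) (wgain gam Q1)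
                               (aff (wcost c gam C) (wgain gam C) v).
  by rewrite eQ !val_cat.
have lt1 : (aff (wcost c gam C) (wgain gam C) v < v)%E.
  have g12 : gw B (T e) y (Q1 ++ Q2).
    by rewrite gw_cat -(gw_last g1) g1 g2.
  have s12 : (size (Q1 ++ Q2) <= m)%N.
    move: sW'le; rewrite eQ !size_cat; move: nC; rewrite -size_eq0 -lt0n; set a1 := size Q1; set a2 := size C; set a3 := size Q2. lia.
  have := key _ _ g12 s12; rewrite eVW val_cat /v aff_lt //; exact: wgain_pos.
have vle : (v <= Ls 0 w)%E.
  case: (eqVneq Q2 [::]) => [Q2nil|Q2n].
    by move: g2; rewrite Q2nil /= => /eqP ->; rewrite /v Q2nil val_nil.
  have g1C : gw B (T e) w (Q1 ++ C) by rewrite gw_cat -(gw_last g1) g1 gC.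
  have s1C : (size (Q1 ++ C) <= m)%N.
    move: sW'le; rewrite eQ !size_cat; move: Q2n; rewrite -size_eq0 -lt0n.
    set a1 := size Q1; set a2 := size C; set a3 := size Q2; lia.
  have e1 : wval (Ls 0) w (Q1 ++ C) = aff (wcost c gam Q1) (wgain gam Q1)
             (aff (wcost c gam C) (wgain gam C) (Ls 0 w)).
    by rewrite -[Q1 ++ C]cats0 -catA !val_cat val_nil.
  have := key _ _ g1C s1C; rewrite eVW e1.
  rewrite aff_lt ?wgain_pos // aff_lt ?wgain_pos //; exact: ltW.
have ysv : ((ys w)%:E <= v)%E.
  have := walk_ineq ysok g2 => h.
  apply: (@le_trans _ _ (aff (wcost c gam Q2) (wgain gam Q2) (ys y)%:E)).
    by rewrite aff_fin lee_fin.
  by rewrite /v /wval aff_le ?wgain_pos.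
have cyc := walk_ineq ysok gC.
clear eVW; clearbody v; move: lt1 vle ysv; case: v => [r||]; last first.
- by [].
- by rewrite aff_py ?wgain_pos // ltxx.
rewrite aff_fin lte_fin lee_fin => lt1 vle ysv.
set a := wcost c gam C in lt1 cyc *; set g := wgain gam C in lt1 cyc *.
have [g1le|glt1] := leP 1 g.
  have h1 : 0 <= g - 1 by rewrite subr_ge0.
  have h2 : 0 <= r - ys w by rewrite subr_ge0.
  have := mulr_ge0 h1 h2; nra.
case: (Hcyc nC gC) => [|[l [el hl]]]; first by rewrite -/g leNgt glt1.
move: vle; rewrite el lee_fin => vle.
have h1 : 0 <= 1 - g by rewrite subr_ge0 ltW.
have h2 : 0 <= l - r by rewrite subr_ge0.
move: hl; rewrite -/a -/g => hl; have := mulr_ge0 h1 h2; nra.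
Qed.
End GenK.
End Gen.


Section Split.
Variables (R : realFieldType) (V E : finType) (tl hd : E -> V) (c gam : E -> R).
Hypothesis gpos : forall e, 0 < gam e.
Variables (B : pred E) (u : V).

Local Notation sT' := (sT tl).
Local Notation sH' := (sH hd u).
Local Notation n := #|V|.

Lemma is_walk_gw (A : pred E) x y W : is_walk tl hd A x y W = gw tl hd A x y W.
Proof. by elim: W x => [|e W IH] x //=; rewrite IH. Qed.

Lemma round_relax y x :
  round tl hd c gam B u y x = relax sT' sH' c gam B y x.
Proof. by []. Qed.

Lemma sH_neq e : sH' e != Some u.
Proof. rewrite /sH; case: ifP => [//|/negbT ne]; apply/eqP => -[h]; by rewrite h eqxx in ne. Qed.

Lemma last_sH x W : x != Some u -> last x (map sH' W) != Some u.
Proof. by elim: W x => [|e W IH] x //= _; apply: IH; exact: sH_neq. Qed.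

Lemma sw_props W x y : gw sT' sH' B x y W -> x != Some u -> y != None ->
  exists x' y', [/\ x = Some x', y = Some y', is_walk tl hd B x' y' W &
                  forall e, e \in W -> (tl e != u) && (hd e != u)].
Proof.
elim: W x => [|e W IH] x /=.
  move=> /eqP -> _; case: y => [y'|//] _.
  by exists y', y'; split => //=; rewrite eqxx.
case/and3P => Be /eqP <- gW ne yN; move: ne; rewrite /sT => ne.
have tne : tl e != u by apply: contra ne => /eqP ->.
have hne : sH' e != None.
  apply/negP => /eqP hN; move: gW; rewrite hN.
  case: (W) => [|f W'] /=; first by move/eqP => yN'; rewrite -yN' in yN.
  by rewrite andbF.
have [x' [y' [ex ey wW allW]]] := IH _ gW (sH_neq e) yN.
move: ex hne; rewrite /sH; case: ifP => [//|/negbT hne] [ex] _.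
exists (tl e), y'; split => //=; first by rewrite Be eqxx ex.
move=> f; rewrite inE => /orP[/eqP ->|/allW //]; by rewrite tne hne.
Qed.


Section GV.
Variables (ys : nat -> option V -> \bar R) (pr : option V -> nat -> option E).
Hypothesis hr : forall i x, (0 < i <= n)%N ->
  ys i x = round tl hd c gam B u (ys i.-1) x.
Hypothesis hp : forall i x, (0 < i <= n)%N ->
  if (ys i x < ys i.-1 x)%E then
    exists e, [/\ pr x i = Some e, B e, sT' e = x &
                  arcval hd c gam u (ys i.-1) e = ys i x]
  else pr x i = None.

Lemma hs i x : (i < n)%N -> ys i.+1 x = relax sT' sH' c gam B (ys i) x.
Proof. by move=> lt; rewrite hr //= ltnS ltnW. Qed.

Lemma ys_step i x : (i < n)%N -> (ys i.+1 x <= ys i x)%E.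
Proof. by move=> lt; rewrite hs // relax_le. Qed.

Lemma ys_mono i x : (i <= n)%N -> (ys i x <= ys 0 x)%E.
Proof. exact: (Ls_mono hs). Qed.

Lemma ys_None i : (i <= n)%N -> ys i None = ys 0 None.
Proof.
elim: i => [//|i IH] lt; rewrite hs //.
by case: (relax_cases sT' sH' c gam B (ys i) None) => [->|[e [_ //]]]; rewrite IH // ltnW.
Qed.

Lemma trace_lem i x : (i <= n)%N ->
  let P := trace hd u pr x i in
  [/\ gw sT' sH' B x (wend hd u x P) P, (size P <= i)%N,
      ys i x = wval c gam (ys 0) (wend hd u x P) P,
      P != [::] -> (ys i x < ys 0 x)%E &
      P != [::] -> exists e, [/\ B e, sH' e = wend hd u x P &
                     (arcval hd c gam u (ys 0) e < ys 0 (sT' e))%E]].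
Proof.
elim: i x => [|i IH] x lt /=.
  by split => //; rewrite ?eqxx ?val_nil.
have := @hp i.+1 x; rewrite /= lt => /(_ isT).
case E0: (pr x i.+1) => [e|].
  case: ifP => [ltx [e' [pe Be Te ae]]|]; last by [].
  case: pe => ee; subst e'.
  have [g1 s1 v1 d1 e1] := IH (sH' e) (ltnW lt).
  set P' := trace hd u pr (sH' e) i in g1 s1 v1 d1 e1 *.
  split.
  - by rewrite /= Be Te eqxx.
  - by [].
  - by rewrite -ae /arcval (val_cons _ gpos) /wend /= -/(wend hd u _ _) -v1.
  - by move=> _; apply: (lt_le_trans ltx); exact: ys_mono (ltnW lt).
  - move=> _; case: (eqVneq P' [::]) => [P0|/e1 //].
    exists e; split => //; first by rewrite /wend /= P0.
    move: v1; rewrite P0 val_nil /= => v1.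
    rewrite Te.
    have v1' : ys i (sH' e) = ys 0 (sH' e) by rewrite v1.
    have -> : arcval hd c gam u (ys 0) e = ys i.+1 x by rewrite -ae /arcval v1'.
    apply: (lt_le_trans ltx); exact: ys_mono (ltnW lt).
case: ifP => [_ [e [pe _ _ _]]|nlt _]; first by [].
have eq1 : ys i.+1 x = ys i x.
  by apply/eqP; rewrite eq_le ys_step // leNgt nlt.
have [g1 s1 v1 d1 e1] := IH x (ltnW lt).
split => //; first by rewrite (leq_trans s1).
- by rewrite eq1.
- by rewrite eq1.
Qed.


Lemma KS (yst : V -> R) :
  feasible_sol tl hd c gam yst ->
  (forall v, ((yst v)%:E <= ys 0 (Some v))%E) -> ((yst u)%:E <= ys 0 None)%E ->
  (forall e, B e -> tl e != u -> hd e != u ->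
     (ys 0 (Some (tl e)) <= aff (c e) (gam e) (ys 0 (Some (hd e))))%E) ->
  (forall z C, C != [::] -> is_walk tl hd B z z C ->
     (forall e, e \in C -> (tl e != u) && (hd e != u)) ->
     ys 0 (Some z) = +oo%E -> 1 <= wgain gam C) ->
  ~~ violated tl hd c gam B u (ys n).
Proof.
move=> feas lbS lbN K2 K3.
pose ys' (x : option V) := if x is Some v then yst v else yst u.
have ysok : forall e, B e -> ys' (sT' e) <= c e + gam e * ys' (sH' e).
  move=> e _; have := feas e; rewrite /ys' /sH /=.
  by case: ifP => [/eqP ->|_]; rewrite lerBlDr addrC.
have yslb : forall v, ((ys' v)%:E <= ys 0 v)%E by case.
have Hm : (#|{: option V}| <= n.+1)%N by rewrite card_option.
have Hcyc : forall w C, C != [::] -> gw sT' sH' B w w C ->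
  1 <= wgain gam C \/
  exists l, ys 0 w = l%:E /\ l <= wcost c gam C + wgain gam C * l.
  move=> w C nC gC.
  have wnN : w != None.
    by case: C nC gC => [//|f C'] _ /= /and3P[_ /eqP <- _].
  have wnu : w != Some u.
    rewrite (gw_last gC); case: C nC gC => [//|f C'] _ _ /=.
    exact: last_sH (sH_neq f).
  have [z [z' [ez ez' wC allC]]] := sw_props gC wnu wnN.
  move: ez'; rewrite ez => -[ezz]; subst z'; subst w.
  case E0: (ys 0 (Some z)) => [l||].
  - right; exists l; split; first by [].
    pose B' := fun e => [&& B e, tl e != u & hd e != u].
    have gC' : gw tl hd B' z z C.
      apply: gw_restrict; first by rewrite -is_walk_gw; exact: wC.
      by move=> f fin Bf; rewrite /B' Bf allC.
    have hw : (ys 0 (Some z) <= wval c gam (fun v => ys 0 (Some v)) z C)%E.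
      apply: (walk_ineqE gpos _ gC') => e /and3P[Be t1 h1]; exact: K2.
    by move: hw; rewrite /wval /= E0 aff_fin lee_fin.
  - by left; apply: (K3 z C).
  - by have := lbS z; rewrite E0.
apply/existsP => -[e /andP[Be viol]].
have := genK gpos hs Hm ysok yslb Hcyc Be.
by rewrite leNgt viol.
Qed.
End GV.

Section GVwrap.
Variables (L0 : option V -> \bar R) (yb' : option V -> \bar R) (P : seq E).
Hypothesis hg : grapevine tl hd c gam B u L0 (Some u) yb' P.

Lemma gv_None : yb' None = L0 None.
Proof.
case: hg => ys [pr [h0 hr hp -> _]]; rewrite -h0; exact: (ys_None hr).
Qed.

Lemma gv_le x : (yb' x <= L0 x)%E.
Proof.
case: hg => ys [pr [h0 hr hp -> _]]; rewrite -h0; exact: (ys_mono hr).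
Qed.

Lemma gv_F1 x y W : gw sT' sH' B x y W -> (size W <= n)%N ->
  (yb' x <= wval c gam L0 y W)%E.
Proof.
case: hg => ys [pr [h0 hr hp -> _]]; rewrite -h0 => gW sW.
exact: (F1 gpos (hs hr) (leqnn n) gW sW).
Qed.

Lemma gv_trace :
  [/\ gw sT' sH' B (Some u) (wend hd u (Some u) P) P, (size P <= n)%N,
      yb' (Some u) = wval c gam L0 (wend hd u (Some u) P) P,
      P != [::] -> (yb' (Some u) < L0 (Some u))%E &
      P != [::] -> exists e, [/\ B e, sH' e = wend hd u (Some u) P &
                     (arcval hd c gam u L0 e < L0 (sT' e))%E]].
Proof.
case: hg => ys [pr [h0 hr hp -> ->]]; rewrite -h0.
exact: (trace_lem hr hp (Some u) (leqnn n)).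
Qed.

Lemma gv_lb (z : option V -> R) :
  (forall e, B e -> z (sT' e) <= c e + gam e * z (sH' e)) ->
  (forall x, ((z x)%:E <= L0 x)%E) -> forall x, ((z x)%:E <= yb' x)%E.
Proof.
case: hg => ys [pr [h0 hr hp -> _]]; rewrite -h0 => ok lb x.
exact: (Ls_lb gpos (hs hr) x (leqnn n) ok lb).
Qed.

Lemma gv_KS (yst : V -> R) :
  feasible_sol tl hd c gam yst ->
  (forall v, ((yst v)%:E <= L0 (Some v))%E) -> ((yst u)%:E <= L0 None)%E ->
  (forall e, B e -> tl e != u -> hd e != u ->
     (L0 (Some (tl e)) <= aff (c e) (gam e) (L0 (Some (hd e))))%E) ->
  (forall z C, C != [::] -> is_walk tl hd B z z C ->
     (forall e, e \in C -> (tl e != u) && (hd e != u)) ->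
     L0 (Some z) = +oo%E -> 1 <= wgain gam C) ->
  ~~ violated tl hd c gam B u yb'.
Proof.
case: hg => ys [pr [h0 hr hp -> _]]; rewrite -h0.
exact: (KS hr).
Qed.

End GVwrap.
End Split.


Section Alg.
Variables (R : realFieldType) (V E : finType) (tl hd : E -> V) (c gam : E -> R).
Hypothesis gpos : forall e, 0 < gam e.

Local Notation F := (feasible_sol tl hd c gam).
Local Notation n := #|V|.

Lemma feas_arc y e : F y -> y (tl e) <= c e + gam e * y (hd e).
Proof. by move=> fy; have := fy e; rewrite lerBlDr addrC. Qed.

Definition yss (u : V) (y : V -> R) (x : option V) : R :=
  if x is Some v then y v else y u.

Lemma yss_ok u y : F y -> forall e,
  yss u y (sT tl e) <= c e + gam e * yss u y (sH hd u e).
Proof.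
move=> fy e; have := fy e; rewrite /yss /sH /=.
by case: ifP => [/eqP ->|_]; rewrite lerBlDr addrC.
Qed.

Lemma sw_ineq u y (B : pred E) x z W : F y ->
  gw (sT tl) (sH hd u) B x z W ->
  yss u y x <= wcost c gam W + wgain gam W * yss u y z.
Proof. move=> fy; apply: (walk_ineq gpos) => e _; exact: yss_ok. Qed.

Section Phase.
Variables (A : pred E) (u : V) (y : V -> \bar R).
Hypothesis Hc5 : forall x C, is_walk tl hd A x x C -> y x = +oo%E -> 1 <= wgain gam C.
Local Notation B := (addout tl A u).
Local Notation sT' := (sT tl).
Local Notation sH' := (sH hd u).

Definition L0of (yb : option V -> \bar R) (d : R) : option V -> \bar R :=
  fun x => if x is Some _ then yb x else d%:E.

Section Orc.
Variables (yb : option V -> \bar R) (d : R) (yb' : option V -> \bar R) (P : seq E).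
Hypothesis hg : grapevine tl hd c gam B u (L0of yb d) (Some u) yb' P.
Hypothesis H1 : forall y', F y' -> forall v, ((y' v)%:E <= yb (Some v))%E.
Hypothesis H2 : ~~ violated tl hd c gam B u yb.
Hypothesis H5 : forall z, z != u -> (yb (Some z) <= y z)%E.

Lemma o_None : yb' None = d%:E.
Proof. exact: (gv_None hg). Qed.

Lemma o_le v : (yb' (Some v) <= yb (Some v))%E.
Proof. exact: (gv_le hg). Qed.

Lemma o_F1 Q : gw sT' sH' B (Some u) None Q -> (size Q <= n)%N ->
  (yb' (Some u) <= (wcost c gam Q + wgain gam Q * d)%:E)%E.
Proof. by move=> gQ sQ; have := gv_F1 gpos hg gQ sQ. Qed.

Lemma o_ub : (forall y', F y' -> y' u <= d) ->
  forall y', F y' -> forall v, ((y' v)%:E <= yb' (Some v))%E.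
Proof.
move=> hd0 y' fy' v.
apply: (gv_lb gpos hg (z := yss u y')) => [e _|x]; first exact: yss_ok.
by case: x => [w|] /=; [exact: H1|rewrite lee_fin hd0].
Qed.

Lemma o_nv : (exists y0, F y0) -> (forall y', F y' -> y' u <= d) ->
  ~~ violated tl hd c gam B u yb'.
Proof.
move=> [y0 fy0] hd0.
apply: (gv_KS gpos hg fy0) => //.
- exact: H1.
- by rewrite /= lee_fin hd0.
- move=> e Be tne hne /=.
  have := H2; apply: contraNle => lt; apply/existsP; exists e.
  by rewrite Be /= /arcval /sH (negPf hne).
- move=> z C nC wC allC /= ybz.
  have zu : z != u.
    by case: C nC wC allC => [//|f C'] _ /= /and3P[_ /eqP <- _] /(_ f); rewrite inE eqxx => /(_ isT) /andP[].
  have yz : y z = +oo%E.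
    by apply/eqP; rewrite -leye_eq -ybz H5.
  apply: (Hc5 _ yz); rewrite is_walk_gw; apply: gw_restrict; first by rewrite -is_walk_gw; exact: wC.
  move=> f fin; rewrite /addout => /orP[//|/eqP tf].
  by have := allC f fin; rewrite tf eqxx.
Qed.

End Orc.

Lemma oracle_shape yb d yb' f' g' :
  oracle tl hd c gam B u yb d yb' f'%:E g' ->
  [/\ ~~ violated tl hd c gam B u yb' /\ yb' None = d%:E,
      yb' (Some u) = (d + f')%:E,
      (forall v, (yb' (Some v) <= yb (Some v))%E),
      (forall Q, gw sT' sH' B (Some u) None Q -> (size Q <= n)%N ->
         (yb' (Some u) <= (wcost c gam Q + wgain gam Q * d)%:E)%E) &
      (g' = -1 /\ exists z Q, gw sT' sH' B (Some u) (Some z) Q /\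
          yb' (Some u) = aff (wcost c gam Q) (wgain gam Q) (yb (Some z))) \/
      (exists Q, [/\ gw sT' sH' B (Some u) None Q, (size Q <= n)%N,
          g' = wgain gam Q - 1 & d + f' = wcost c gam Q + wgain gam Q * d])].
Proof.
case=> P [hg hfv hg'].
have nv : ~~ violated tl hd c gam B u yb'.
  by apply/negP => vi; rewrite vi in hfv.
rewrite (negPf nv) in hfv.
have eu : yb' (Some u) = (d + f')%:E.
  move: hfv; case: (yb' (Some u)) => [r||] //.
  by rewrite -EFinB => -[->]; rewrite addrC subrK.
have [gP sP vP _ _] := gv_trace gpos hg.
split => //.
- by split => //; exact: (o_None hg).
- exact: (o_le hg).
- exact: (o_F1 hg).
case E0: (wend hd u (Some u) P) => [z|]; rewrite E0 in hg' vP gP.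
  left; split => //; exists z, P; split => //.
right; exists P; split => //.
by move: vP; rewrite eu /wval /= aff_fin => -[].
Qed.

Lemma oracle_ub yb d yb' fv g' :
  oracle tl hd c gam B u yb d yb' fv g' ->
  (forall y', F y' -> forall v, ((y' v)%:E <= yb (Some v))%E) ->
  (forall y', F y' -> y' u <= d) ->
  forall y', F y' -> forall v, ((y' v)%:E <= yb' (Some v))%E.
Proof. by case=> P [hg _ _] H1 hd0; exact: (o_ub hg H1 hd0). Qed.

Lemma oracle_nv yb d yb' fv g' :
  oracle tl hd c gam B u yb d yb' fv g' ->
  (forall y', F y' -> forall v, ((y' v)%:E <= yb (Some v))%E) ->
  ~~ violated tl hd c gam B u yb ->
  (forall z, z != u -> (yb (Some z) <= y z)%E) ->
  (exists y0, F y0) -> (forall y', F y' -> y' u <= d) ->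
  ~~ violated tl hd c gam B u yb'.
Proof. by case=> P [hg _ _] H1 H2 H5; exact: (o_nv hg H1 H2 H5). Qed.

Lemma oracle_noinf yb d yb' g' :
  oracle tl hd c gam B u yb d yb' -oo%E g' ->
  (forall y', F y' -> forall v, ((y' v)%:E <= yb (Some v))%E) ->
  ~~ violated tl hd c gam B u yb ->
  (forall z, z != u -> (yb (Some z) <= y z)%E) ->
  (exists y0, F y0) -> (forall y', F y' -> y' u <= d) -> False.
Proof.
move=> ho H1 H2 H5 [y0 fy0] hd0.
have nv := oracle_nv ho H1 H2 H5 (ex_intro _ y0 fy0) hd0.
have ub := oracle_ub ho H1 hd0 fy0 u.
case: ho => P [hg hfv _]; rewrite (negPf nv) in hfv.
move: ub hfv; case: (yb' (Some u)) => [r||] //.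
Qed.

Record NInv (yb : option V -> \bar R) (d f g : R) : Prop := {
  ni_ub : forall y', F y' -> forall v, ((y' v)%:E <= yb (Some v))%E;
  ni_ud : forall y', F y' -> y' u <= d;
  ni_nv : ~~ violated tl hd c gam B u yb;
  ni_None : yb None = d%:E;
  ni_u : yb (Some u) = (d + f)%:E;
  ni_f : f <= 0;
  ni_g : f = 0 \/ g = -1 \/ exists P, [/\ gw sT' sH' B (Some u) None P,
           (size P <= n)%N, g = wgain gam P - 1 &
           d + f = wcost c gam P + wgain gam P * d];
  ni_5 : forall z, z != u -> (yb (Some z) <= y z)%E }.

Lemma sw_ineqN y' Q : F y' -> gw sT' sH' B (Some u) None Q ->
  y' u <= wcost c gam Q + wgain gam Q * y' u.
Proof. by move=> fy gQ; have := sw_ineq fy gQ. Qed.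

Lemma sw_ineqS y' Q z : F y' -> gw sT' sH' B (Some u) (Some z) Q ->
  y' u <= wcost c gam Q + wgain gam Q * y' z.
Proof. by move=> fy gQ; have := sw_ineq fy gQ. Qed.

Lemma next_ub yb d f g : NInv yb d f g -> f != 0 ->
  forall y', F y' -> y' u <= d - f / g.
Proof.
move=> Ni nf y' fy.
have fneg : f < 0 by rewrite lt_neqAle nf (ni_f Ni).
case: (ni_g Ni) => [f0|[g1|[P [gP sP eg ed]]]]; first by rewrite f0 eqxx in nf.
- have := ni_ub Ni fy u; rewrite (ni_u Ni) lee_fin g1.
  by rewrite invrN1 mulrN1 opprK.
- have yd := ni_ud Ni fy.
  have hw := sw_ineqN fy gP.
  set gm := wgain gam P in eg ed hw; set cP := wcost c gam P in ed hw.
  have gm1 : gm < 1.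
    rewrite ltNge; apply/negP => g1.
    have h1 : 0 <= gm - 1 by rewrite subr_ge0.
    have h2 : 0 <= d - y' u by rewrite subr_ge0.
    have := mulr_ge0 h1 h2; nra.
  have ef : f = cP + gm * d - d by lra.
  have -> : d - f / g = cP / (1 - gm).
    by rewrite eg ef; field; rewrite !subr_eq0 (gt_eqF gm1) eq_sym (gt_eqF gm1).
  have h1 : 0 < 1 - gm by rewrite subr_gt0.
  rewrite (ler_pdivlMr _ _ h1); nra.
Qed.

Lemma next_le yb d f g yb1 f1 g1 : NInv yb d f g -> f != 0 ->
  oracle tl hd c gam B u yb (d - f / g) yb1 f1%:E g1 -> f1 <= 0.
Proof.
move=> Ni nf ho; have [[_ _] e1 le1 F11 _] := oracle_shape ho.
case: (ni_g Ni) => [f0|[g1'|[P [gP sP eg ed]]]]; first by rewrite f0 eqxx in nf.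
- have := le1 u; rewrite e1 (ni_u Ni) lee_fin g1' invrN1 mulrN1 opprK; lra.
- have := F11 P gP sP; rewrite e1 lee_fin.
  set gm := wgain gam P in eg ed *; set cP := wcost c gam P in ed *.
  case: (eqVneq g 0) => [g0|gn0].
    rewrite g0 invr0 mulr0 subr0; move: eg; rewrite g0 => /eqP; rewrite eq_sym subr_eq0 => /eqP gm1.
    move: ed (ni_f Ni); rewrite gm1 !mul1r; lra.
  have -> : cP + gm * (d - f / g) = d - f / g.
    have ef : f = cP + gm * d - d by lra.
    rewrite ef eg; field; by rewrite -eg.
  lra.
Qed.

Lemma mk_NInv yb d f g d' yb' f' g' : NInv yb d f g ->
  (forall y', F y' -> y' u <= d') ->
  oracle tl hd c gam B u yb d' yb' f'%:E g' -> f' <= 0 -> NInv yb' d' f' g'.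
Proof.
move=> Ni hd' ho f'le.
have [[nv eN] eu le1 _ sh] := oracle_shape ho.
split => //.
- exact: (oracle_ub ho (ni_ub Ni) hd').
- case: sh => [[-> _]|[Q [gQ sQ eg ed]]]; first by right; left.
  by right; right; exists Q.
- by move=> z zu; apply: le_trans (le1 z) (ni_5 Ni zu).
Qed.

Lemma up_from_neg yb d f g d' yb' f' g' : NInv yb d f g ->
  oracle tl hd c gam B u yb d' yb' f'%:E g' -> f' < 0 -> g' < 0 ->
  forall y', F y' -> y' u <= d'.
Proof.
move=> Ni ho fn gn y' fy.
have [_ eu _ _ [[_ [z [Q [gQ eQ]]]]|[Q [gQ sQ eg ed]]]] := oracle_shape ho.
- have hw := sw_ineqS fy gQ.
  have := ni_ub Ni fy z.
  rewrite -(aff_le (wcost c gam Q) _ _ (wgain_pos gpos Q)) -eQ eu aff_fin lee_fin.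
  move=> h; apply: ltW; apply: (le_lt_trans hw); apply: (le_lt_trans h); lra.
- have hw := sw_ineqN fy gQ.
  set gm := wgain gam Q in eg ed hw; set cP := wcost c gam Q in ed hw.
  rewrite leNgt; apply/negP => lt.
  have h1 : 0 < 1 - gm by rewrite subr_gt0 -subr_lt0 -eg.
  have h2 : 0 < y' u - d' by rewrite subr_gt0.
  have := mulr_gt0 h1 h2; nra.
Qed.

Lemma no_neg yb d f g d' yb' f' g' : NInv yb d f g ->
  (forall y', F y' -> y' u <= d') ->
  oracle tl hd c gam B u yb d' yb' f'%:E g' -> f' < 0 -> 0 <= g' ->
  forall y', F y' -> False.
Proof.
move=> Ni hd' ho fn gp y' fy.
have [_ eu _ _ [[g1 _]|[Q [gQ sQ eg ed]]]] := oracle_shape ho.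
  by move: gp; rewrite g1 ler0N1.
have hw := sw_ineqN fy gQ.
have yd := hd' _ fy.
set gm := wgain gam Q in eg ed hw; set cP := wcost c gam Q in ed hw.
have h1 : 0 <= gm - 1 by rewrite subr_ge0 -subr_ge0 -eg.
have h2 : 0 <= d' - y' u by rewrite subr_ge0.
have := mulr_ge0 h1 h2; nra.
Qed.

Lemma newton_ok yb d f g res :
  newton tl hd c gam B u yb d f g res -> NInv yb d f g -> (exists y0, F y0) ->
  (res = NoRoot R V -> False) /\ (forall yb', res = Root yb' -> exists d', NInv yb' d' 0 0).
Proof.
move=> hn; elim: hn => {yb d f g res}
  [yb d g | yb d f g yb1 g1 nf ho | yb d f g yb1 f1 g1 nf ho f1n g1p
  | yb d f g yb1 f1 g1 yb2 f2 g2 res nf ho1 nc ho2 f2n g2n hn IH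
  | yb d f g yb1 f1 g1 yb2 fv2 g2 res nf ho1 nc ho2 nacc hn IH] Ni hf.
- split => // yb' [<-]; exists d; case: Ni => *; split => //.
  by left.
- split => // _.
  exact: (oracle_noinf ho (ni_ub Ni) (ni_nv Ni) (ni_5 Ni) hf (next_ub Ni nf)).
- split => // _; case: hf => y0 fy0.
  exact: (no_neg Ni (next_ub Ni nf) ho f1n g1p fy0).
- have N1 := mk_NInv Ni (next_ub Ni nf) ho1 (next_le Ni nf ho1).
  have up := up_from_neg N1 ho2 f2n g2n.
  have N2 := mk_NInv N1 up ho2 (ltW f2n).
  exact: IH N2 hf.
- have N1 := mk_NInv Ni (next_ub Ni nf) ho1 (next_le Ni nf ho1).
  exact: IH N1 hf.
Qed.

Definition ubnd (yy : V -> \bar R) :=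
  forall y', F y' -> forall v, ((y' v)%:E <= yy v)%E.
Definition satA (AA : pred E) (yy : V -> \bar R) :=
  forall e, AA e -> (yy (tl e) <= aff (c e) (gam e) (yy (hd e)))%E.

Section Start.
Variables (r : R) (yb1 : option V -> \bar R) (P : seq E).
Hypothesis Hub : ubnd y.
Hypothesis Hsat : satA A y.
Hypothesis hsl : start_label tl hd c gam B y u r.
Hypothesis hg : grapevine tl hd c gam B u (ybar_init y u r) (Some u) yb1 P.

Local Notation L0 := (ybar_init y u r).

Lemma minout_lb y' : F y' -> ((y' u)%:E <= minout tl hd c gam y u)%E.
Proof.
move=> fy; apply: le_bigmin; first exact: leey.
move=> e /eqP te; apply: (@le_trans _ _ (aff (c e) (gam e) (y' (hd e))%:E)).
  by rewrite aff_fin lee_fin -te feas_arc.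
by rewrite aff_le // Hub.
Qed.

Lemma minout_le e : tl e = u ->
  (minout tl hd c gam y u <= aff (c e) (gam e) (y (hd e)))%E.
Proof.
move=> te; rewrite /minout.
by apply: bigmin_le_cond; rewrite te.
Qed.

Lemma st_ur y' : F y' -> y' u <= r.
Proof.
move=> fy; case: hsl => [em|[_ [C [cC gC er]]]].
  by have := minout_lb fy; rewrite em lee_fin.
move: cC => /andP[wC _]; rewrite is_walk_gw in wC.
have := walk_ineq gpos (z := y') (fun e _ => feas_arc e fy) wC.
set cc := wcost c gam C in er *; set gg := wgain gam C in gC er *.
move=> h; rewrite er ler_pdivlMr ?subr_gt0 //; nra.
Qed.


Lemma st_lb y' : F y' -> forall x, ((yss u y' x)%:E <= L0 x)%E.
Proof.
move=> fy [v|] /=; last by rewrite lee_fin st_ur.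
by case: eqP => [->|_]; [rewrite lee_fin st_ur|exact: Hub].
Qed.

Lemma st_nv : (exists y0, F y0) -> ~~ violated tl hd c gam B u yb1.
Proof.
move=> [y0 fy0]; apply: (gv_KS gpos hg fy0).
- by move=> v; have := st_lb fy0 (Some v).
- by have := st_lb fy0 None.
- move=> e Be tne hne /=; rewrite (negPf tne) (negPf hne).
  by apply: Hsat; move: Be; rewrite /addout (negPf tne) orbF.
- move=> z C nC wC allC /=.
  have zu : z != u.
    by case: C nC wC allC => [//|f C'] _ /= /and3P[_ /eqP <- _] /(_ f); rewrite inE eqxx => /(_ isT) /andP[].
  rewrite (negPf zu) => yz.
  apply: (Hc5 _ yz); rewrite is_walk_gw; apply: gw_restrict; first by rewrite -is_walk_gw; exact: wC.
  move=> f fin; rewrite /addout => /orP[//|/eqP tf].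
  by have := allC f fin; rewrite tf eqxx.
Qed.

Lemma st_arc e : B e -> sH' e != None ->
  ~~ (arcval hd c gam u L0 e < L0 (sT' e))%E.
Proof.
move=> Be; rewrite /arcval /sH; case: ifP => [//|/negbT hne] _ /=.
rewrite (negPf hne) -leNgt -/(aff _ _ _).
case: (eqVneq (tl e) u) => [te|tne].
  case: hsl => [em|[em _]]; first by rewrite -em; exact: minout_le.
  by have := minout_le te; rewrite em leye_eq => /eqP ->; exact: leey.
by apply: Hsat; move: Be; rewrite /addout (negPf tne) orbF.
Qed.

Lemma st_endN : P != [::] -> wend hd u (Some u) P = None.
Proof.
move=> nP; have [_ _ _ _ /(_ nP) [e [Be he lt]]] := gv_trace gpos hg.
case E0: (wend hd u (Some u) P) => [z|] //.
by have := st_arc Be; rewrite he E0 lt => /(_ isT).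
Qed.

Lemma st_noinf : (exists y0, F y0) -> P != [::] -> 1 <= wgain gam P -> False.
Proof.
move=> [y0 fy0] nP g1.
have [gP _ vP lt _] := gv_trace gpos hg.
move: gP vP (lt nP); rewrite st_endN // => gP -> /=; rewrite eqxx /wval /= aff_fin lte_fin.
have hw := sw_ineqN fy0 gP.
have yr := st_ur fy0.
set gm := wgain gam P in g1 hw *; set cP := wcost c gam P in hw *.
have h1 : 0 <= gm - 1 by rewrite subr_ge0.
have h2 : 0 <= r - y0 u by rewrite subr_ge0.
have := mulr_ge0 h1 h2; nra.
Qed.

Lemma st_NInv a : ~~ violated tl hd c gam B u yb1 -> yb1 (Some u) = a%:E ->
  NInv yb1 r (a - r) (wgain gam P - 1).
Proof.
move=> nv ea.
have ale : a <= r by have := gv_le hg (Some u); rewrite ea /= eqxx lee_fin.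
split => //.
- move=> y' fy v; have := gv_lb gpos hg (z := yss u y') (fun e _ => yss_ok u fy e) (st_lb fy) (Some v).
  by [].
- exact: st_ur.
- by rewrite (gv_None hg).
- by rewrite ea addrC subrK.
- by rewrite subr_le0.
- case: (eqVneq P [::]) => [P0|nP].
    left; have [_ _ vP _ _] := gv_trace gpos hg.
    by move: vP; rewrite ea P0 val_nil /= eqxx => -[->]; rewrite subrr.
  right; right; exists P.
  have [gP sP vP _ _] := gv_trace gpos hg.
  move: gP vP; rewrite st_endN // => gP; rewrite ea /wval /= aff_fin => -[->].
  by split => //; rewrite addrC subrK.
- move=> z zu; have := gv_le hg (Some z); by rewrite /= (negPf zu).
Qed.
End Start.
End Phase.
End Alg.


Section Cyc.
Variables (R : realFieldType) (V E : finType) (tl hd : E -> V) (c gam : E -> R).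
Hypothesis gpos : forall e, 0 < gam e.

Lemma prop_oo (AA : pred E) (yy : V -> \bar R) x z W :
  satA tl hd c gam AA yy -> gw tl hd AA x z W -> yy x = +oo%E -> yy z = +oo%E.
Proof.
move=> sat; elim: W x => [|e W IH] x /=; first by move/eqP <-.
case/and3P => Ae /eqP tx gW yx; apply: (IH _ gW).
have := sat e Ae; rewrite tx yx leye_eq aff_eqy //.
by move/eqP.
Qed.

Lemma tails_in (AA : pred E) x z W :
  gw tl hd AA x z W -> forall e, e \in W -> tl e \in x :: map hd W.
Proof.
elim: W x => [|e W IH] x //= /and3P[_ /eqP tx gW] f.
rewrite inE => /orP[/eqP ->|fin]; first by rewrite tx inE eqxx.
by have := IH _ gW f fin; rewrite !inE => /orP[->|->]; rewrite ?orbT.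
Qed.

Lemma tails_closed (AA : pred E) w D : gw tl hd AA w w D -> D != [::] ->
  forall e, e \in D -> tl e \in map hd D.
Proof.
move=> gD nD e ein; have := tails_in gD ein; rewrite inE => /orP[/eqP ->|//].
rewrite {1}(gw_last gD); case: (D) nD => [//|f D'] _ /=.
exact: mem_last.
Qed.

Lemma gw_rconsE (AA : pred E) x z W e :
  gw tl hd AA x z (rcons W e) -> [/\ gw tl hd AA x (tl e) W, AA e & hd e = z].
Proof.
rewrite -cats1 gw_cat /= => /andP[g1 /and3P[Ae /eqP te /eqP he]].
by rewrite te.
Qed.

Lemma gw_rconsI (AA : pred E) x z W e :
  gw tl hd AA x (tl e) W -> AA e -> hd e = z -> gw tl hd AA x z (rcons W e).
Proof.
move=> g1 Ae he; rewrite -cats1 gw_cat /= -(gw_last g1) g1 Ae he !eqxx.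
by [].
Qed.

Section Infty.
Variables (A : pred E) (u : V) (yy : V -> \bar R).
Local Notation B := (addout tl A u).
Hypothesis yu : yy u = +oo%E.
Hypothesis sat : satA tl hd c gam B yy.
Hypothesis old : forall x C, x != u -> gw tl hd A x x C -> yy x = +oo%E ->
  1 <= wgain gam C.
Hypothesis nocyc : ~ (exists C, is_cycle_at tl hd (addout tl A u) u C /\ wgain gam C < 1).

Lemma closed_at_u k W : (size W <= k)%N -> gw tl hd B u u W -> 1 <= wgain gam W.
Proof.
elim: k W => [|k IH] W.
  by rewrite leqn0 size_eq0 => /eqP -> _; rewrite wgain_nil.
case/lastP: W => [_ _|W0 el]; first by rewrite wgain_nil.
rewrite size_rcons ltnS => sW gR.
have [g0 Bel hel] := gw_rconsE gR.
case: (boolP (u \in map hd W0)) => [uin|uout].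
  have [W1 [W2 [eW n1 g1 g2]]] := prefix_to uin g0.
  have e1 : rcons W0 el = W1 ++ rcons W2 el by rewrite eW rcons_cat.
  rewrite e1 wgain_cat; apply: mulr_ege1.
  - apply: IH g1; move: sW; rewrite eW size_cat => h.
    move: n1; rewrite -size_eq0 -lt0n => h'.
    set a := size W1 in h h' *; set b := size W2 in h h' *; lia.
  - apply: IH; first by move: sW; rewrite eW size_cat size_rcons; move: n1; rewrite -size_eq0 -lt0n; set a := size W1; set b := size W2; lia.
    exact: gw_rconsI.
case: (boolP (uniq (map hd W0))) => [un|nun].
  rewrite leNgt; apply/negP => lt; apply: nocyc; exists (rcons W0 el); split => //.
  rewrite /is_cycle_at size_rcons /= -cats1 take_size_cat // cats1 un andbT.
  by rewrite is_walk_gw.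
have nun' : ~~ uniq (u :: map hd W0) by rewrite /= negb_and nun orbT.
have [Q1 [D [Q2 [w [eW nD gQ1 gD gQ2]]]]] := decomp g0 nun'.
have sub : forall f, f \in D -> tl f != u.
  move=> f fin; have := tails_closed gD nD fin; apply: contraL => /eqP ->.
  by move: uout; rewrite eW !map_cat !mem_cat negb_or => /andP[_]; rewrite negb_or => /andP[].
have wu : w != u.
  case: (D) nD gD sub => [//|f D'] _ /= /and3P[_ /eqP <- _] /(_ f); rewrite inE eqxx; exact.
have gDA : gw tl hd A w w D.
  apply: (gw_restrict gD) => f fin; rewrite /addout => /orP[//|/eqP tf].
  by have := sub f fin; rewrite tf eqxx.
have yw : yy w = +oo%E := prop_oo sat gQ1 yu.
have gD1 := old wu gDA yw.
have e1 : rcons W0 el = Q1 ++ D ++ rcons Q2 el by rewrite eW !rcons_cat.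
have gR2 : gw tl hd B u u (Q1 ++ rcons Q2 el).
  rewrite gw_cat -(gw_last gQ1) gQ1 /=; exact: gw_rconsI.
have h2 : 1 <= wgain gam (Q1 ++ rcons Q2 el).
  apply: IH gR2; move: sW; rewrite eW !size_cat size_rcons.
  move: nD; rewrite -size_eq0 -lt0n; set a := size Q1; set b := size D; set d := size Q2; lia.
move: h2; rewrite e1 !wgain_cat.
have p1 := wgain_pos gpos Q1; have p2 := wgain_pos gpos (rcons Q2 el).
set a := wgain gam Q1 in p1 *; set x := wgain gam (rcons Q2 el) in p2 *.
set g := wgain gam D in gD1 *.
move=> h; have := mulr_gt0 p1 p2 => p12.
have : a * x <= a * (g * x).
  by rewrite ler_pM2l // -{1}(mul1r x) ler_pM2r.
lra.
Qed.

Lemma cyc_new x C : gw tl hd B x x C -> yy x = +oo%E -> 1 <= wgain gam C.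
Proof.
move=> gC yx.
case: (boolP (has (fun e => tl e == u) C)) => [/hasP[e ein /eqP te]|nh].
  case/splitPr: ein gC => C1 C2 gC.
  move: gC; rewrite gw_cat => /andP[g1 g2].
  have mu : last x (map hd C1) = u.
    by move: g2 => /= /and3P[_ /eqP <- _].
  rewrite mu in g1 g2.
  have gR : gw tl hd B u u ((e :: C2) ++ C1).
    by rewrite gw_cat -(gw_last g2) g2 /=.
  have := closed_at_u (leqnn _) gR.
  by rewrite !wgain_cat mulrC.
case: (eqVneq x u) => [xu|xu].
  case: (C) gC nh => [|f C'] /=; first by rewrite wgain_nil.
  by case/and3P => _ /eqP -> _; rewrite xu eqxx.
apply: (old xu _ yx); apply: (gw_restrict gC) => f fin; rewrite /addout => /orP[//|tf].
by move/hasPn: nh => /(_ f fin); rewrite tf.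
Qed.

End Infty.

Section Fin.
Variables (A : pred E) (y : V -> \bar R).
Local Notation F := (feasible_sol tl hd c gam).
Local Notation n := #|V|.
Hypothesis Hall : forall e, A e.
Hypothesis Hub : ubnd tl hd c gam y.
Hypothesis Hsat : satA tl hd c gam A y.
Hypothesis Hc5 : forall x C, is_walk tl hd A x x C -> y x = +oo%E -> 1 <= wgain gam C.
Variables (y0 : V -> R).
Hypothesis fy0 : F y0.

Let mm := \big[Order.min/1]_(e : E) gam e.

Lemma mm_pos : 0 < mm.
Proof.
rewrite /mm; apply: (big_ind (fun z => 0 < z)) => //.
by move=> a b a0 b0; rewrite lt_min a0 b0.
Qed.

Lemma mm_le1 : mm <= 1.
Proof. exact: bigmin_le_id. Qed.

Lemma mm_le e : mm <= gam e.
Proof. exact: bigmin_le. Qed.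

Lemma wgain_lb W : (size W <= n)%N -> mm ^+ n <= wgain gam W.
Proof.
move=> sW; apply: (le_trans (ler_wiXn2l (ltW mm_pos) mm_le1 sW)).
elim: W {sW} => [|e W IH]; first by rewrite wgain_nil expr0.
rewrite wgain_cons /= exprS; apply: ler_pM => //.
- exact: ltW mm_pos.
- exact: exprn_ge0 (ltW mm_pos).
- exact: mm_le.
Qed.

Lemma y_ninf v : y v != -oo%E.
Proof. by have := Hub fy0 v; case: (y v). Qed.

Lemma fin_K u K : 0 <= K -> exists zr, F zr /\
  (((y0 u + mm ^+ n * K)%:E <= (zr u)%:E)%E \/ (y u <= (zr u)%:E)%E).
Proof.
move=> K0.
pose L0 (v : V) : \bar R := if y v == +oo%E then (y0 v + K)%:E else y v.
pose Ls (i : nat) := iter i (relax tl hd c gam A) L0.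
have Hs : forall i x, (i < n)%N -> Ls i.+1 x = relax tl hd c gam A (Ls i) x by [].
have Hm : (#|V| <= n.+1)%N by [].
have ysok : forall e, A e -> y0 (tl e) <= c e + gam e * y0 (hd e).
  by move=> e _; exact: (feas_arc e fy0).
have yslb : forall v, ((y0 v)%:E <= Ls 0%N v)%E.
  move=> v; rewrite /Ls /= /L0; case: ifP => _; last exact: Hub.
  by rewrite lee_fin lerDl.
have Hcyc : forall w C, C != [::] -> gw tl hd A w w C ->
    1 <= wgain gam C \/ exists l, Ls 0%N w = l%:E /\ l <= wcost c gam C + wgain gam C * l.
  move=> w C _ gC; case: (eqVneq (y w) +oo%E) => [yw|yw].
    by left; apply: (Hc5 _ yw); rewrite is_walk_gw.
  right; move: (y_ninf w) yw; rewrite /Ls /= /L0.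
  case E0: (y w) => [l||] // _ _; exists l; split => //.
  have := walk_ineqE gpos Hsat gC; rewrite /wval E0 aff_fin lee_fin; exact.
pose z := Ls n.
have z1 : forall e, (z (tl e) <= aff (c e) (gam e) (z (hd e)))%E.
  move=> e; exact: (genK gpos Hs Hm ysok yslb Hcyc (Hall e)).
have z2 : forall v, ((y0 v)%:E <= z v)%E.
  move=> v; exact: (Ls_lb gpos Hs v (leqnn n) ysok yslb).
have z3 : forall v, (z v <= L0 v)%E.
  move=> v; exact: (Ls_mono Hs v (leqnn n)).
have zfin : forall v, z v = (fine (z v))%:E.
  move=> v; have := z2 v; have := z3 v; rewrite /L0.
  case: (z v) => [r||] //=; case: ifP => // /negbT yv.
  by move: (y_ninf v) yv; case: (y v).
pose zr v := fine (z v).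
exists zr; split.
  move=> e; have := z1 e; rewrite (zfin (tl e)) (zfin (hd e)) aff_fin lee_fin.
  by rewrite lerBlDr addrC.
have [w [W [gW sW ezu]]] := F2 gpos Hs u (leqnn n).
rewrite /zr -(zfin u) /z ezu /wval /Ls /= /L0.
case: ifP => [/eqP yw|/negbT yw].
  left; rewrite aff_fin lee_fin.
  have hw := walk_ineq gpos ysok gW.
  have gl := wgain_lb sW.
  set g := wgain gam W in hw gl *; set cc := wcost c gam W in hw *.
  have gK : mm ^+ n * K <= g * K by rewrite ler_wpM2r.
  nra.
right; have := walk_ineqE gpos Hsat gW; rewrite /wval.
case: (y w) yw => [r||] //.
Qed.


Lemma fin_ymax : is_ymax tl hd c gam y.
Proof.
move=> u; split; first by move=> y' fy; exact: Hub.
move=> b hb.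
have gl0 : 0 < mm ^+ n by rewrite exprn_gt0 // mm_pos.
case E0: (y u) => [r||].
- pose K := Num.max 0 ((r - y0 u) / mm ^+ n).
  have K0 : 0 <= K by rewrite le_max lexx.
  have [zr [fz hz]] := fin_K u K0.
  apply: le_trans (hb _ fz); case: hz => [h|]; last by rewrite E0.
  apply: le_trans h; rewrite lee_fin -lerBlDl mulrC -ler_pdivrMr //.
  by rewrite le_max lexx orbT.
- case Eb: b => [s||]; last first.
  + by have := hb _ fy0; rewrite Eb.
  + exact: leey.
  pose K := Num.max 0 ((s + 1 - y0 u) / mm ^+ n).
  have K0 : 0 <= K by rewrite le_max lexx.
  have [zr [fz hz]] := fin_K u K0.
  have := hb _ fz; rewrite Eb lee_fin => hs.
  case: hz => [|]; last by rewrite E0.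
  rewrite lee_fin => h.
  have : (s + 1 - y0 u) / mm ^+ n <= K by rewrite le_max lexx orbT.
  rewrite ler_pdivrMr // => h2.
  have : s + 1 <= zr u by rewrite mulrC in h2; lra.
  by move=> h3; exfalso; lra.
- by have := y_ninf u; rewrite E0.
Qed.
End Fin.

Section Main.
Local Notation F := (feasible_sol tl hd c gam).

Lemma phases_ok A y s res :
  phases tl hd c gam A y s res -> (exists y0, F y0) ->
  ubnd tl hd c gam y -> satA tl hd c gam A y ->
  (forall e, A e || (tl e \in s)) ->
  (forall x C, is_walk tl hd A x x C -> y x = +oo%E -> 1 <= wgain gam C) ->
  (res = Infeasible -> False) /\ (forall y', res = Labels y' -> is_ymax tl hd c gam y').
Proof.
move=> hph; elim: hph => {A y s res}
  [A y | A y u s res hm hnc hph IH | A y u s r yb1 P hsl hg hv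
  | A y u s r yb1 P a hsl hg hv ea hn | A y u s r yb1 P a yb res hsl hg hv ea hn hph IH]
  hf Hub Hsat Hcov Hc5.
- split => // y' [<-]; case: hf => y0 fy0.
  have Hall : forall e, A e by move=> e; have := Hcov e; rewrite in_nil orbF.
  exact: (fin_ymax Hall Hub Hsat Hc5 fy0).
- pose y' := fun v => if v == u then +oo%E else y v.
  have yle : forall v, (y v <= y' v)%E.
    by move=> v; rewrite /y'; case: ifP => _ //; exact: leey.
  have sat' : satA tl hd c gam (addout tl A u) y'.
    move=> e; rewrite /addout; case: (eqVneq (tl e) u) => [te|tne].
      move=> _; rewrite /y' te eqxx.
      case: (eqVneq (hd e) u) => [he|hne]; first by rewrite aff_py.
      have := minout_le hd c gam y te.
      by rewrite hm leye_eq => /eqP ->.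
    rewrite orbF => Ae; rewrite /y' (negPf tne).
    apply: le_trans (Hsat e Ae) _; rewrite aff_le //; exact: yle.
  apply: IH => //.
  + move=> y0 fy0 v; apply: le_trans (yle v); exact: Hub.
  + move=> e; rewrite /addout; have := Hcov e; rewrite inE.
    by case: (A e) => //=; case: (tl e == u).
  + move=> x C wC yx; rewrite is_walk_gw in wC.
    apply: (cyc_new _ sat' _ hnc wC yx).
    * by rewrite /y' eqxx.
    * move=> x' C' xu gC yx'; apply: (Hc5 x'); first by rewrite is_walk_gw.
      by move: yx'; rewrite /y' (negPf xu).
- split => // _.
  case/orP: hv => [vi|/andP[sP g1]].
    by move: vi; apply/negP; exact: (st_nv gpos Hc5 Hub Hsat hsl hg hf).
  by apply: (st_noinf gpos Hub Hsat hsl hg hf _ g1); rewrite -size_eq0 -lt0n.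
- split => // _.
  have nv : ~~ violated tl hd c gam (addout tl A u) u yb1.
    by move: hv; rewrite negb_or => /andP[].
  have Ni := st_NInv gpos Hub Hsat hsl hg nv ea.
  by case: (newton_ok gpos Hc5 hn Ni hf) => /(_ erefl).
- have nv : ~~ violated tl hd c gam (addout tl A u) u yb1.
    by move: hv; rewrite negb_or => /andP[].
  have Ni := st_NInv gpos Hub Hsat hsl hg nv ea.
  have [_ hroot] := newton_ok gpos Hc5 hn Ni hf.
  have [d' Nd] := hroot yb erefl.
  pose y'' := fun v => yb (Some v).
  have yu : y'' u = (d' + 0)%:E by rewrite /y'' (ni_u Nd).
  have sat'' : satA tl hd c gam (addout tl A u) y''.
    move=> e Be; move/existsPn: (ni_nv Nd) => /(_ e); rewrite Be /= -leNgt.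
    rewrite /arcval /y'' /sH /=; case: ifP => [/eqP he|_] //.
    by rewrite (ni_None Nd) he (ni_u Nd) addr0.
  apply: IH => //.
  + exact: (ni_ub Nd).
  + move=> e; rewrite /addout; have := Hcov e; rewrite inE.
    by case: (A e) => //=; case: (tl e == u).
  + move=> x C wC yx.
    have notu : forall e, e \in C -> tl e != u.
      move=> e ein; apply/negP => /eqP te.
      case/splitPr: ein wC => C1 C2; rewrite is_walk_gw gw_cat => /andP[g1 g2].
      have ml : last x (map hd C1) = u by move: g2 => /= /and3P[_ /eqP <- _].
      have := prop_oo sat'' g1 yx; rewrite ml yu //.
    case: (C) wC notu => [|f C'] wC notu; first by rewrite wgain_nil.
    have xu : x != u.
      by move: wC => /= /and3P[_ /eqP <- _]; apply: notu; rewrite inE eqxx.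
    have yxo : y x = +oo%E.
      by have := ni_5 Nd xu; rewrite yx leye_eq => /eqP.
    apply: (Hc5 _ _ _ yxo); rewrite is_walk_gw; apply: (gw_restrict (B := addout tl A u)).
      by rewrite -is_walk_gw.
    move=> e ein; rewrite /addout => /orP[//|te].
    by have := notu e ein; rewrite te.
Qed.

End Main.
End Cyc.


Theorem theorem4p8 (R : realFieldType) (V E : finType) (tl hd : E -> V)
    (c gam : E -> R) :
  (forall e, 0 < gam e) ->
  forall s : seq V, perm_eq s (enum V) ->
  forall res : result R V, alg3 tl hd c gam s res ->
  (forall y, res = Labels y -> feasible tl hd c gam -> is_ymax tl hd c gam y) /\
  (res = Infeasible -> ~ feasible tl hd c gam).
Proof.
move=> gpos s hperm res halg.
have ub0 : ubnd tl hd c gam (fun _ : V => +oo%E) by move=> y' _ v; exact: leey.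
have sat0 : satA tl hd c gam (fun _ : E => false) (fun _ : V => +oo%E) by [].
have cov0 : forall e, false || (tl e \in s) by move=> e; rewrite (perm_mem hperm) mem_enum.
have cyc0 : forall (x : V) (C : seq E), is_walk tl hd (fun _ : E => false) x x C ->
    (fun _ : V => (+oo%E : \bar R)) x = +oo%E -> 1 <= wgain gam C.
  move=> x C; case: C => [|e C'] /= _ _ //; by rewrite wgain_nil.
split.
- move=> y ey hf; have [_ h] := phases_ok gpos halg hf ub0 sat0 cov0 cyc0.
  exact: h y ey.
- move=> ei hf; have [h _] := phases_ok gpos halg hf ub0 sat0 cov0 cyc0.
  exact: h ei.
Qed.
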